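(* Let $K\ge 1$, $D\ge 1$, reservoir sizes $N^{(1)},\dots,N^{(K)}\ge 1$, encoder sizes $M^{(1)},\dots,M^{(K-1)}\ge 1$, and a leak rate $\gamma\in(0,1]$ be fixed. Let $\mathbf{W}^{res(i)}\in\mathbb{R}^{N^{(i)}\times N^{(i)}}$ ($i=1,\dots,K$), $\mathbf{W}^{in(1)}\in\mathbb{R}^{N^{(1)}\times D}$, $\mathbf{W}^{in(i)}\in\mathbb{R}^{N^{(i)}\times M^{(i-1)}}$ ($i=2,\dots,K$) and $\mathbf{W}^{enc(j)}\in\mathbb{R}^{M^{(j)}\times N^{(j)}}$ ($j=1,\dots,K-1$) be fixed real matrices. Consider the Deep-ESN dynamics defined below, with $f=\tanh$ applied componentwise. Suppose that for every $i=1,\dots,K$ the largest singular value satisfies $\overline{\sigma}(\mathbf{W}^{res(i)})<1$. Then for every input sequence $(\mathbf{u}(t))_{t\ge 1}$ in $\mathbb{R}^D$ and any two choices of initial states $\{\mathbf{x}^{(i)}_{res}(0)\}_{i=1}^K$ and $\{\widetilde{\mathbf{x}}^{(i)}_{res}(0)\}_{i=1}^K$, the two resulting state trajectories (driven by the same input sequence) satisfy $$\lim_{t\to\infty}\|\mathbf{x}^{(i)}_{res}(t)-\widetilde{\mathbf{x}}^{(i)}_{res}(t)\|_2=0\quad\text{for all } i=1,\dots,K,$$ i.e. the Deep-ESN has the echo-state property.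
   Context: Deep-ESN dynamics (with linear encoders): for $t\ge 0$ and $i=1,\dots,K$, $$\mathbf{x}^{(i)}_{res}(t+1)=(1-\gamma)\,\mathbf{x}^{(i)}_{res}(t)+\gamma\, f\big(\mathbf{W}^{res(i)}\mathbf{x}^{(i)}_{res}(t)+\mathbf{W}^{in(i)}\mathbf{x}^{(i)}_{in}(t+1)\big),$$ where $\mathbf{x}^{(1)}_{in}(t+1)=\mathbf{u}(t+1)$ and, for $i\ge 2$, $\mathbf{x}^{(i)}_{in}(t+1)=\mathbf{x}^{(i-1)}_{enc}(t+1)$ with the (linear) encoder output $\mathbf{x}^{(j)}_{enc}(t)=\mathbf{W}^{enc(j)}\mathbf{x}^{(j)}_{res}(t)$. The tilde trajectory is defined by the same equations with the same input $\mathbf{u}$ but different initial reservoir states. $f=\tanh$ is applied componentwise and is 1-Lipschitz. $\overline{\sigma}(\mathbf{A})$ denotes the largest singular value (operator 2-norm) of a matrix $\mathbf{A}$. *)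

(* Defs.v *)
From Stdlib Require Import Reals.
Open Scope R_scope.

(* Vectors in R^n are functions nat -> R (only indices < n matter);
   an m x n matrix is a function nat -> nat -> R (row, column). *)

Fixpoint vsum (n : nat) (f : nat -> R) : R :=
  match n with
  | O => 0
  | S k => vsum k f + f k
  end.

Definition matvec (n : nat) (A : nat -> nat -> R) (x : nat -> R) : nat -> R :=
  fun r => vsum n (fun j => A r j * x j).

Definition norm2 (n : nat) (x : nat -> R) : R :=
  sqrt (vsum n (fun j => x j ^ 2)).

Definition vsub (x y : nat -> R) : nat -> R := fun j => x j - y j.

Definition largest_singular_value (m n : nat) (A : nat -> nat -> R) (s : R) : Prop :=
  is_lub (fun r => exists x : nat -> R, norm2 n x = 1 /\ r = norm2 m (matvec n A x)) s.

Definition f_act (x : R) : R := tanh x.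

(* Input to layer i at a given time: u(t) for i = 1,
   W^{enc(i-1)} x^{(i-1)}_res(t) for i >= 2. *)
Definition layer_input (N : nat -> nat) (Wenc : nat -> nat -> nat -> R)
    (x : nat -> nat -> nat -> R) (u : nat -> nat -> R) (i t : nat) : nat -> R :=
  match i with
  | S (S k) => matvec (N (S k)) (Wenc (S k)) (x (S k) t)
  | _ => u t
  end.

Definition in_dim (D : nat) (M : nat -> nat) (i : nat) : nat :=
  match i with
  | S (S k) => M (S k)
  | _ => D
  end.

(* x : layer i (1..K) -> time t -> state vector is a Deep-ESN trajectory
   driven by input u (u t is u(t), t >= 1). *)
Definition deep_esn_traj (K D : nat) (N M : nat -> nat) (gamma : R)
    (Wres Win Wenc : nat -> nat -> nat -> R) (u : nat -> nat -> R)
    (x : nat -> nat -> nat -> R) : Prop :=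
  forall (i t r : nat), (1 <= i <= K)%nat -> (r < N i)%nat ->
    x i (S t) r =
      (1 - gamma) * x i t r
      + gamma * f_act (matvec (N i) (Wres i) (x i t) r
                       + matvec (in_dim D M i) (Win i)
                                (layer_input N Wenc x u i (S t)) r).

(* Main.v *)
Require Import Defs.
From Stdlib Require Import Reals Lra Psatz Lia.
From Coquelicot Require Import Coquelicot.
Open Scope R_scope.

Lemma tanh_lip (a b : R) : Rabs (tanh a - tanh b) <= Rabs (a - b).
Proof.
  pose (g := fun x => (exp x - exp (-x)) / (exp x + exp (-x))).
  assert (Hg : forall x, tanh x = g x).
  { intro x. unfold tanh, sinh, cosh, g.
    assert (0 < exp x) by apply exp_pos. assert (0 < exp (-x)) by apply exp_pos.
    field. lra. }
  rewrite !Hg.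
  pose (df := fun x => ((exp x + exp (-x)) * (exp x + exp (-x)) - (exp x - exp (-x)) * (exp x - exp (-x))) / ((exp x + exp (-x)) * (exp x + exp (-x)))).
  destruct (MVT_cor4 g df b (Rabs (a - b))) with (b := a) as [c [Hc _]].
  - intros c _. unfold g, df.
    assert (0 < exp c) by apply exp_pos. assert (0 < exp (-c)) by apply exp_pos.
    auto_derive.
    + lra.
    + field. lra.
  - lra.
  - rewrite Hc, Rabs_mult.
    assert (Hd : Rabs (df c) <= 1).
    { unfold df. assert (0 < exp c) by apply exp_pos. assert (0 < exp (-c)) by apply exp_pos.
      set (p := exp c) in *. set (q := exp (-c)) in *.
      assert (0 < (p+q)*(p+q)) by nra.
      rewrite Rabs_right.
      - apply Rmult_le_reg_r with ((p+q)*(p+q)); auto. unfold Rdiv. rewrite Rmult_assoc, Rinv_l by lra. clearbody p q. assert (0 <= (p-q)*(p-q)) by apply Rle_0_sqr. lra.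
      - apply Rle_ge. apply Rdiv_le_0_compat; nra. }
    assert (0 <= Rabs (a - b)) by apply Rabs_pos. nra.
Qed.

Lemma vsum_ext n f g : (forall j, (j < n)%nat -> f j = g j) -> vsum n f = vsum n g.
Proof. induction n; simpl; intros H; [reflexivity|]. rewrite IHn by (intros; apply H; lia). rewrite H by lia. reflexivity. Qed.

Lemma vsum_le n f g : (forall j, (j < n)%nat -> f j <= g j) -> vsum n f <= vsum n g.
Proof. induction n; simpl; intros H; [lra|]. assert (f n <= g n) by (apply H; lia).
  assert (vsum n f <= vsum n g) by (apply IHn; intros; apply H; lia). lra. Qed.

Lemma vsum_nonneg n f : (forall j, (j < n)%nat -> 0 <= f j) -> 0 <= vsum n f.
Proof. intros H. replace 0 with (vsum n (fun _ => 0)). apply vsum_le; auto.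
  induction n; simpl; auto. rewrite IHn; [lra|]. intros; apply H; lia. Qed.

Lemma vsum_plus n f g : vsum n (fun j => f j + g j) = vsum n f + vsum n g.
Proof. induction n; simpl; [lra|]. rewrite IHn. lra. Qed.

Lemma vsum_scal n c f : vsum n (fun j => c * f j) = c * vsum n f.
Proof. induction n; simpl; [lra|]. rewrite IHn. lra. Qed.

Lemma vsum_minus n f g : vsum n (fun j => f j - g j) = vsum n f - vsum n g.
Proof. induction n; simpl; [lra|]. rewrite IHn. lra. Qed.

Lemma vsum_term n f j : (forall j, (j < n)%nat -> 0 <= f j) -> (j < n)%nat -> f j <= vsum n f.
Proof. induction n; intros H Hj; [lia|]. simpl.
  assert (0 <= vsum n f) by (apply vsum_nonneg; intros; apply H; lia).
  destruct (Nat.eq_dec j n) as [->|Hn]; [lra|].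
  assert (f j <= vsum n f) by (apply IHn; [intros; apply H; lia| lia]).
  assert (0 <= f n) by (apply H; lia). lra. Qed.

Definition sq n x := vsum n (fun j => x j ^ 2).

Lemma sq_nonneg n x : 0 <= sq n x.
Proof. apply vsum_nonneg. intros. apply pow2_ge_0. Qed.

Lemma CS n a b : (vsum n (fun j => a j * b j)) ^ 2 <= sq n a * sq n b.
Proof.
  set (A := sq n a). set (B := vsum n (fun j => a j * b j)). set (C := sq n b).
  assert (H : forall l, 0 <= A + 2 * l * B + l ^ 2 * C).
  { intro l. assert (E : A + 2 * l * B + l ^ 2 * C = vsum n (fun j => (a j + l * b j) ^ 2)).
    { unfold A, B, C, sq. 
      rewrite (vsum_ext n (fun j => (a j + l * b j) ^ 2) (fun j => a j ^ 2 + ((2 * l) * (a j * b j) + l ^ 2 * b j ^ 2)))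
        by (intros; ring).
      rewrite vsum_plus, vsum_plus, vsum_scal, vsum_scal. ring. }
    rewrite E. apply vsum_nonneg. intros. apply pow2_ge_0. }
  assert (HA : 0 <= A) by apply sq_nonneg. assert (HC : 0 <= C) by apply sq_nonneg.
  destruct (Req_dec C 0) as [HC0|HC0].
  - rewrite HC0 in H |- *. destruct (Req_dec B 0) as [->|HB]; [lra|].
    specialize (H (- (A + 1) / (2 * B))).
    replace (A + 2 * (- (A + 1) / (2 * B)) * B + (- (A + 1) / (2 * B)) ^ 2 * 0) with (-1) in H by (field; auto).
    lra.
  - specialize (H (- B / C)).
    assert (0 < C) by lra.
    replace (A + 2 * (- B / C) * B + (- B / C) ^ 2 * C) with ((A * C - B ^ 2) / C) in H by (field; auto).
    assert (0 <= A * C - B ^ 2).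
    { apply Rmult_le_reg_r with (/ C). apply Rinv_0_lt_compat; auto. rewrite Rmult_0_l. exact H. }
    lra.
Qed.

Lemma norm2_nonneg n x : 0 <= norm2 n x.
Proof. apply sqrt_pos. Qed.

Lemma norm2_sq n x : norm2 n x = sqrt (sq n x).
Proof. reflexivity. Qed.

Lemma minkowski n p q : norm2 n (fun j => p j + q j) <= norm2 n p + norm2 n q.
Proof.
  rewrite !norm2_sq.
  assert (HA : 0 <= sq n p) by apply sq_nonneg. assert (HC : 0 <= sq n q) by apply sq_nonneg.
  assert (E : sq n (fun j => p j + q j) = sq n p + 2 * vsum n (fun j => p j * q j) + sq n q).
  { unfold sq. rewrite (vsum_ext n (fun j => (p j + q j) ^ 2) (fun j => p j ^ 2 + (2 * (p j * q j) + q j ^ 2))) by (intros; ring).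
    rewrite vsum_plus, vsum_plus, vsum_scal. ring. }
  assert (HB : vsum n (fun j => p j * q j) <= sqrt (sq n p) * sqrt (sq n q)).
  { rewrite <- sqrt_mult by auto. eapply Rle_trans; [apply RRle_abs|].
    rewrite <- (sqrt_pow2 (Rabs (vsum n (fun j => p j * q j)))) by apply Rabs_pos. apply sqrt_le_1_alt. rewrite pow2_abs.
    apply CS. }
  rewrite E. rewrite <- (sqrt_pow2 (sqrt (sq n p) + sqrt (sq n q))) by (apply Rplus_le_le_0_compat; apply sqrt_pos).
  apply sqrt_le_1_alt.
  replace ((sqrt (sq n p) + sqrt (sq n q)) ^ 2) with (sqrt (sq n p) * sqrt (sq n p) + 2 * (sqrt (sq n p) * sqrt (sq n q)) + sqrt (sq n q) * sqrt (sq n q)) by ring.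
  rewrite !sqrt_sqrt by auto. lra.
Qed.

Lemma norm2_scal_abs n a p : 0 <= a -> norm2 n (fun j => a * Rabs (p j)) = a * norm2 n p.
Proof.
  intros Ha. rewrite !norm2_sq. unfold sq.
  rewrite (vsum_ext n (fun j => (a * Rabs (p j)) ^ 2) (fun j => a ^ 2 * p j ^ 2)).
  2:{ intros. rewrite Rpow_mult_distr, pow2_abs. reflexivity. }
  rewrite vsum_scal, sqrt_mult by (try apply pow2_ge_0; apply vsum_nonneg; intros; apply pow2_ge_0).
  rewrite sqrt_pow2 by auto. reflexivity.
Qed.

Lemma norm2_mono n z w : (forall j, (j < n)%nat -> Rabs (z j) <= w j) -> norm2 n z <= norm2 n w.
Proof.
  intros H. apply sqrt_le_1_alt. apply vsum_le. intros j Hj. specialize (H j Hj).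
  assert (0 <= Rabs (z j)) by apply Rabs_pos.
  rewrite <- (pow2_abs (z j)). nra.
Qed.

Lemma norm2_comb n z p q a b : 0 <= a -> 0 <= b ->
  (forall r, (r < n)%nat -> Rabs (z r) <= a * Rabs (p r) + b * Rabs (q r)) ->
  norm2 n z <= a * norm2 n p + b * norm2 n q.
Proof.
  intros Ha Hb H. eapply Rle_trans; [apply norm2_mono; exact H|].
  eapply Rle_trans; [apply (minkowski n (fun r => a * Rabs (p r)) (fun r => b * Rabs (q r)))|].
  rewrite !norm2_scal_abs by auto. lra.
Qed.

Definition frob (m n : nat) (A : nat -> nat -> R) := sqrt (vsum m (fun r => sq n (A r))).

Lemma frob_nonneg m n A : 0 <= frob m n A.
Proof. apply sqrt_pos. Qed.

Lemma frob_bound m n A x : norm2 m (matvec n A x) <= frob m n A * norm2 n x.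
Proof.
  unfold frob, norm2. rewrite <- sqrt_mult.
  2:{ apply vsum_nonneg; intros; apply sq_nonneg. }
  2:{ apply sq_nonneg. }
  apply sqrt_le_1_alt. rewrite Rmult_comm, <- vsum_scal.
  apply vsum_le. intros r _. unfold matvec. rewrite Rmult_comm. apply CS.
Qed.

Lemma matvec_sub n A x y r : matvec n A (vsub x y) r = matvec n A x r - matvec n A y r.
Proof. unfold matvec, vsub. rewrite <- vsum_minus. apply vsum_ext. intros; ring. Qed.

Lemma matvec_scal n A c x r : matvec n A (fun j => c * x j) r = c * matvec n A x r.
Proof. unfold matvec. rewrite <- vsum_scal. apply vsum_ext. intros; ring. Qed.

Lemma norm2_scal n c x : 0 <= c -> norm2 n (fun j => c * x j) = c * norm2 n x.
Proof. intros Hc. rewrite <- norm2_scal_abs by auto. unfold norm2. apply f_equal.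
  apply vsum_ext. intros. rewrite !Rpow_mult_distr, pow2_abs. reflexivity. Qed.

Lemma sv_bound n A s x : largest_singular_value n n A s ->
  norm2 n (matvec n A x) <= Rmax s 0 * norm2 n x.
Proof.
  intros [Hub _].
  assert (H0 : 0 <= Rmax s 0) by apply Rmax_r.
  destruct (Req_dec (sq n x) 0) as [Hz|Hz].
  - assert (Hx : forall j, (j < n)%nat -> x j = 0).
    { intros j Hj. assert (x j ^ 2 <= sq n x) by (apply (vsum_term n (fun j => x j ^ 2)); auto; intros; apply pow2_ge_0).
      assert (0 <= x j ^ 2) by apply pow2_ge_0. nra. }
    assert (E : norm2 n (matvec n A x) = 0).
    { unfold norm2. rewrite <- sqrt_0. apply f_equal.
      transitivity (vsum n (fun _ => 0)); [| clear; induction n; simpl; lra].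
      apply vsum_ext. intros j _. unfold matvec.
      rewrite (vsum_ext n (fun j0 => A j j0 * x j0) (fun _ => 0)).
      - replace (vsum n (fun _ => 0)) with 0 by (clear; induction n; simpl; lra). simpl. ring.
      - intros. rewrite Hx by auto. ring. }
    rewrite E. assert (0 <= norm2 n x) by apply norm2_nonneg. nra.
  - assert (Hk : 0 < norm2 n x).
    { unfold norm2. apply sqrt_lt_R0. assert (0 <= sq n x) by apply sq_nonneg. unfold sq in *. lra. }
    set (k := norm2 n x) in *.
    assert (Hy : norm2 n (fun j => / k * x j) = 1).
    { rewrite norm2_scal. fold k. field. lra. left; apply Rinv_0_lt_compat; auto. }
    assert (Hle : norm2 n (matvec n A (fun j => / k * x j)) <= s).
    { apply Hub. exists (fun j => / k * x j). split; auto. }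
    assert (E : norm2 n (matvec n A (fun j => / k * x j)) = / k * norm2 n (matvec n A x)).
    { rewrite <- norm2_scal by (left; apply Rinv_0_lt_compat; auto).
      unfold norm2. apply f_equal. apply vsum_ext. intros. rewrite matvec_scal. reflexivity. }
    rewrite E in Hle.
    assert (norm2 n (matvec n A x) <= s * k).
    { apply Rmult_le_reg_l with (/ k). apply Rinv_0_lt_compat; auto.
      replace (/ k * (s * k)) with s by (field; lra). auto. }
    assert (s <= Rmax s 0) by apply Rmax_l. nra.
Qed.

Lemma seq_contr (e g : nat -> R) (c : R) : 0 <= c < 1 -> (forall t, 0 <= e t) ->
  Un_cv g 0 -> (forall t, e (S t) <= c * e t + g t) -> Un_cv e 0.
Proof.
  intros Hc He Hg Hst eps Heps.
  assert (Hd : 0 < eps * (1 - c) / 2) by (apply Rdiv_lt_0_compat; nra).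
  destruct (Hg _ Hd) as [T HT].
  assert (Hk : forall k, e (T + k)%nat <= c ^ k * e T + eps / 2).
  { induction k.
    - rewrite Nat.add_0_r. simpl. lra.
    - rewrite Nat.add_succ_r. eapply Rle_trans; [apply Hst|].
      specialize (HT (T + k)%nat ltac:(lia)). unfold R_dist in HT. rewrite Rminus_0_r in HT.
      apply Rabs_def2 in HT. destruct HT as [HT _]. simpl.
      assert (c * e (T + k)%nat <= c * (c ^ k * e T + eps / 2)) by (apply Rmult_le_compat_l; lra).
      nra. }
  assert (HeT := He T).
  assert (Hy : 0 < eps / (2 * (e T + 1))) by (apply Rdiv_lt_0_compat; lra).
  destruct (pow_lt_1_zero c ltac:(rewrite Rabs_right; lra) _ Hy) as [N0 HN0].
  exists (T + N0)%nat. intros n Hn. unfold R_dist. rewrite Rminus_0_r, Rabs_right by (apply Rle_ge; auto).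
  replace n with (T + (n - T))%nat by lia.
  eapply Rle_lt_trans; [apply Hk|].
  specialize (HN0 (n - T)%nat ltac:(lia)).
  assert (Hp : 0 <= c ^ (n - T)) by (apply pow_le; lra).
  rewrite Rabs_right in HN0 by lra.
  assert (c ^ (n - T) * e T <= eps / (2 * (e T + 1)) * e T) by (apply Rmult_le_compat_r; lra).
  assert (eps / (2 * (e T + 1)) * e T < eps / 2).
  { unfold Rdiv. rewrite Rinv_mult. 
    assert (0 < / (e T + 1)) by (apply Rinv_0_lt_compat; lra).
    assert (/ (e T + 1) * e T < 1).
    { apply Rmult_lt_reg_l with (e T + 1); [lra|]. rewrite <- Rmult_assoc, Rinv_r by lra. lra. }
    assert (0 < eps * / 2) by lra. nra. }
  lra.
Qed.

Lemma squeeze (h v : nat -> R) (B : R) : 0 <= B -> (forall t, 0 <= h t) ->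
  (forall t, h t <= B * v t) -> Un_cv v 0 -> Un_cv h 0.
Proof.
  intros HB Hh Hhv Hv eps Heps.
  destruct (Hv (eps / (B + 1))) as [T HT]. apply Rdiv_lt_0_compat; lra.
  exists T. intros n Hn. specialize (HT n Hn). unfold R_dist in *. rewrite Rminus_0_r in *.
  rewrite Rabs_right by (apply Rle_ge; auto).
  apply Rabs_def2 in HT. destruct HT as [HT _].
  assert (B * v n <= B * (eps / (B + 1))) by (apply Rmult_le_compat_l; lra).
  assert (B * (eps / (B + 1)) < eps).
  { apply Rmult_lt_reg_l with (B + 1); [lra|]. field_simplify; lra. }
  specialize (Hhv n). lra.
Qed.
Lemma norm2_ext n a b : (forall j, (j < n)%nat -> a j = b j) -> norm2 n a = norm2 n b.
Proof. intros H. unfold norm2. apply f_equal. apply vsum_ext. intros. rewrite H by auto. reflexivity. Qed.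

Theorem mainTheorem1
  (K D : nat) (N M : nat -> nat) (gamma : R)
  (Wres Win Wenc : nat -> nat -> nat -> R)
  (HK : (1 <= K)%nat) (HD : (1 <= D)%nat)
  (HN : forall i, (1 <= i <= K)%nat -> (1 <= N i)%nat)
  (HM : forall j, (1 <= j <= K - 1)%nat -> (1 <= M j)%nat)
  (Hgamma : 0 < gamma <= 1)
  (Hsigma : forall i, (1 <= i <= K)%nat ->
     exists s, largest_singular_value (N i) (N i) (Wres i) s /\ s < 1) :
  forall (u : nat -> nat -> R) (x xt : nat -> nat -> nat -> R),
    deep_esn_traj K D N M gamma Wres Win Wenc u x ->
    deep_esn_traj K D N M gamma Wres Win Wenc u xt ->
    forall i, (1 <= i <= K)%nat ->
      Un_cv (fun t => norm2 (N i) (vsub (x i t) (xt i t))) 0.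
Proof.
  intros u x xt Hx Hxt.
  set (e := fun i t => norm2 (N i) (vsub (x i t) (xt i t))).
  set (l := fun i t => norm2 (in_dim D M i) (vsub (layer_input N Wenc x u i t) (layer_input N Wenc xt u i t))).
  assert (Hstep : forall i, (1 <= i <= K)%nat -> exists c, 0 <= c < 1 /\ forall t,
     e i (S t) <= c * e i t + gamma * frob (N i) (in_dim D M i) (Win i) * l i (S t)).
  { intros i Hi. destruct (Hsigma i Hi) as [s [Hs Hs1]].
    exists (1 - gamma + gamma * Rmax s 0). split.
    { assert (0 <= Rmax s 0) by apply Rmax_r. assert (Rmax s 0 < 1) by (apply Rmax_lub_lt; lra). nra. }
    intro t.
    set (d := vsub (x i t) (xt i t)).
    set (lv := vsub (layer_input N Wenc x u i (S t)) (layer_input N Wenc xt u i (S t))).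
    set (q := fun r => matvec (N i) (Wres i) d r + matvec (in_dim D M i) (Win i) lv r).
    assert (H1 : e i (S t) <= (1 - gamma) * norm2 (N i) d + gamma * norm2 (N i) q).
    { apply norm2_comb; try lra. intros r Hr. unfold vsub at 1.
      rewrite (Hx i t r Hi Hr), (Hxt i t r Hi Hr).
      unfold q, d, lv. rewrite !matvec_sub. unfold vsub.
      unfold f_act.
      match goal with |- Rabs ((1 - gamma) * ?X + gamma * tanh ?A - ((1 - gamma) * ?Y + gamma * tanh ?B)) <= _ =>
        assert (HT := tanh_lip A B);
        replace ((1 - gamma) * X + gamma * tanh A - ((1 - gamma) * Y + gamma * tanh B))
          with ((1 - gamma) * (X - Y) + gamma * (tanh A - tanh B)) by ring end.
      eapply Rle_trans; [apply Rabs_triang|].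
      rewrite !Rabs_mult, (Rabs_right (1 - gamma)), (Rabs_right gamma) by lra.
      apply Rplus_le_compat_l. apply Rmult_le_compat_l; [lra|].
      eapply Rle_trans; [exact HT|]. right. f_equal. ring. }
    assert (H2 : norm2 (N i) q <= Rmax s 0 * e i t + frob (N i) (in_dim D M i) (Win i) * l i (S t)).
    { eapply Rle_trans; [apply minkowski|].
      apply Rplus_le_compat; [apply sv_bound; exact Hs| apply frob_bound]. }
    assert (He : 0 <= e i t) by apply norm2_nonneg.
    change (norm2 (N i) d) with (e i t) in H1.
    assert (gamma * norm2 (N i) q <= gamma * (Rmax s 0 * e i t + frob (N i) (in_dim D M i) (Win i) * l i (S t)))
      by (apply Rmult_le_compat_l; lra).
    lra. }
  assert (Hl1 : forall t, l 1%nat t = 0).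
  { intro t. unfold l. simpl layer_input. unfold norm2. rewrite <- sqrt_0. apply f_equal.
    unfold vsub. transitivity (vsum (in_dim D M 1) (fun _ => 0)).
    - apply vsum_ext. intros. simpl. ring.
    - clear. induction (in_dim D M 1); simpl; lra. }
  assert (Hl2 : forall k t, l (S (S k)) t <= frob (M (S k)) (N (S k)) (Wenc (S k)) * e (S k) t).
  { intros k t. unfold l, e. simpl layer_input. simpl in_dim.
    eapply Rle_trans; [|apply frob_bound].
    right. apply norm2_ext. intros. rewrite matvec_sub. unfold vsub. reflexivity. }
  assert (Main : forall k, (S k <= K)%nat -> Un_cv (e (S k)) 0).
  { induction k; intros Hk.
    - destruct (Hstep 1%nat ltac:(lia)) as [c [Hc Hst]].
      apply (seq_contr _ (fun _ => 0) c Hc).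
      + intro; apply norm2_nonneg.
      + intros eps Heps. exists 0%nat. intros. unfold R_dist. rewrite Rminus_0_r, Rabs_R0. lra.
      + intro t. specialize (Hst t). rewrite Hl1 in Hst. lra.
    - destruct (Hstep (S (S k)) ltac:(lia)) as [c [Hc Hst]].
      set (G := gamma * frob (N (S (S k))) (in_dim D M (S (S k))) (Win (S (S k)))).
      assert (HG : 0 <= G) by (apply Rmult_le_pos; [lra|apply frob_nonneg]).
      apply (seq_contr _ (fun t => G * l (S (S k)) (S t)) c Hc).
      + intro; apply norm2_nonneg.
      + apply (squeeze _ (fun t => e (S k) (S t)) (G * frob (M (S k)) (N (S k)) (Wenc (S k)))).
        * apply Rmult_le_pos; [lra|apply frob_nonneg].
        * intro t. apply Rmult_le_pos; [lra|apply norm2_nonneg].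
        * intro t. rewrite Rmult_assoc. apply Rmult_le_compat_l; [lra|]. apply Hl2.
        * intros eps Heps. destruct (IHk ltac:(lia) eps Heps) as [T HT].
          exists T. intros n Hn. apply HT. lia.
      + intro t. apply Hst. }
  intros i Hi. destruct i as [|k]; [lia|]. apply Main. lia.
Qed.
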